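(* Let $d,N\in\mathbb{N}$, $a_1,\dots,a_N\in\mathbb{R}^d$ and $b_1,\dots,b_N,c_1,\dots,c_N,\beta\in\mathbb{R}$ be fixed, and define $\Phi(x)=\sum_{i=1}^N c_i\,\mathrm{ReLU}(\langle a_i,x\rangle+b_i)+\beta$ and $\widetilde{\Phi}(x)=\sum_{i=1}^N c_i(\langle a_i,x\rangle+b_i)+\beta$ for $x\in\mathbb{R}^d$. Then $\mathrm{Lip}(\Phi)\ge\frac12\mathrm{Lip}(\widetilde{\Phi})$.
   Context: $\mathrm{ReLU}(t)=\max\{0,t\}$; $\mathrm{Lip}(f)=\sup_{x\neq y}|f(x)-f(y)|/\|x-y\|_2$. *)

(* Defs.v *)
From HB Require Import structures.
From mathcomp Require Import all_boot all_order all_algebra.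
From mathcomp Require Import all_classical all_reals.
From mathcomp Require Import ereal.
Set Implicit Arguments. Unset Strict Implicit. Unset Printing Implicit Defensive.
Import Order.TTheory GRing.Theory Num.Theory.
Local Open Scope ring_scope.
Local Open Scope classical_set_scope.

Section Defs.
Variable R : realType.

Definition ReLU (t : R) : R := Num.max 0 t.

Definition dotp (d : nat) (u v : 'I_d -> R) : R := \sum_(j < d) u j * v j.
Definition norm2 (d : nat) (u : 'I_d -> R) : R := Num.sqrt (dotp u u).

Definition Lip (d : nat) (f : ('I_d -> R) -> R) : \bar R :=
  ereal_sup [set r : \bar R | exists x y : 'I_d -> R,
     x <> y /\ r = ((`|f x - f y| / norm2 (fun j => x j - y j))%:E)].
End Defs.

(* Main.v *)
Require Import Defs.
From HB Require Import structures.
From mathcomp Require Import all_boot all_order all_algebra.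
From mathcomp Require Import all_classical all_reals.
From mathcomp Require Import ereal.
From mathcomp Require Import lra ring.
Import Order.TTheory GRing.Theory Num.Theory.
Local Open Scope ring_scope.
Local Open Scope classical_set_scope.

Section Helpers.
Variable R : realType.

Lemma dotp_ge0 d (u : 'I_d -> R) : 0 <= dotp u u.
Proof. by apply: sumr_ge0 => j _; rewrite -expr2 sqr_ge0. Qed.

Lemma CS d (u v : 'I_d -> R) : dotp u v ^+ 2 <= dotp u u * dotp v v.
Proof.
have H : 0 <= \sum_(j < d) \sum_(k < d) (u j * v k - u k * v j) ^+ 2.
  by apply: sumr_ge0 => j _; apply: sumr_ge0 => k _; exact: sqr_ge0.
set h := fun j k => (u j * u j) * (v k * v k) - ((u j * v j) * (u k * v k)).
have E : \sum_(j < d) \sum_(k < d) (u j * v k - u k * v j) ^+ 2 =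
   (dotp u u * dotp v v - dotp u v ^+ 2) *+ 2.
  transitivity (\sum_(j < d) \sum_(k < d) (h j k + h k j)).
    by apply: eq_bigr => j _; apply: eq_bigr => k _; rewrite /h; ring.
  under eq_bigr => j _ do rewrite big_split /=.
  rewrite big_split /= [X in _ + X]exchange_big /= -mulr2n.
  congr (_ *+ 2).
  under eq_bigr => j _ do rewrite /h sumrB -mulr_sumr -mulr_sumr.
  rewrite sumrB -mulr_suml -mulr_suml expr2; congr (_ - _).
move: H; rewrite E pmulrn_lge0 // subr_ge0 //.
Qed.

Lemma normbound d (w z : 'I_d -> R) : `|dotp w z| / norm2 z <= norm2 w.
Proof.
have ge0 : 0 <= norm2 z by rewrite /norm2 sqrtr_ge0.
case: (eqVneq (norm2 z) 0) => [->|nz]; first by rewrite invr0 mulr0 sqrtr_ge0.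
have zpos : 0 < norm2 z by rewrite lt_neqAle eq_sym nz ge0.
rewrite ler_pdivrMr // /norm2 -sqrtrM ?dotp_ge0 // -sqrtr_sqr ler_wsqrtr //.
exact: CS.
Qed.

Lemma relu_b (p b : R) : `|ReLU (p + b) - ReLU (- p + b) - p| <= 2 * `|b|.
Proof.
rewrite /ReLU !maxEle.
case: (lerP 0 b) => hb; [rewrite (ger0_norm hb) | rewrite (ltr0_norm hb)];
case: (lerP 0 (p + b)) => h1; case: (lerP 0 (- p + b)) => h2; rewrite ler_norml; apply/andP; split; lra.
Qed.
End Helpers.

Theorem proposition4p8 (R : realType) (d N : nat)
  (a : 'I_N -> 'I_d -> R) (b c : 'I_N -> R) (beta : R) :
  let Phi := fun x : 'I_d -> R =>
    \sum_(i < N) c i * ReLU (dotp (a i) x + b i) + beta in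
  let Phit := fun x : 'I_d -> R =>
    \sum_(i < N) c i * (dotp (a i) x + b i) + beta in
  ((2^-1)%:E * Lip Phit <= Lip Phi)%E.
Proof.
cbv zeta.
set Phi := (fun x : 'I_d -> R => \sum_(i < N) c i * ReLU (dotp (a i) x + b i) + beta).
set Phit := (fun x : 'I_d -> R => \sum_(i < N) c i * (dotp (a i) x + b i) + beta).
set w := fun j => \sum_(i < N) c i * a i j.
set n := norm2 w.
have dotpB : forall (u x y : 'I_d -> R),
    dotp u x - dotp u y = dotp u (fun j => x j - y j).
  by move=> u x y; rewrite /dotp -sumrB; apply: eq_bigr => j _; ring.
have HT : forall x y, Phit x - Phit y = dotp w (fun j => x j - y j).
  move=> x y; rewrite /Phit opprD addrACA subrr addr0 -sumrB.
  transitivity (\sum_(i < N) c i * dotp (a i) (fun j => x j - y j)).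
    by apply: eq_bigr => i _; rewrite -dotpB; ring.
  rewrite /dotp /w; under eq_bigr => i _ do rewrite mulr_sumr.
  rewrite exchange_big /=; apply: eq_bigr => j _; rewrite mulr_suml.
  by apply: eq_bigr => i _; ring.
have HU : (Lip Phit <= n%:E)%E.
  apply: ge_ereal_sup => r [x [y [_ ->]]].
  by rewrite lee_fin HT; exact: normbound.
have n0 : 0 <= n by rewrite /n /norm2 sqrtr_ge0.
have H1 : ((2^-1)%:E * Lip Phit <= (2^-1 * n)%:E)%E.
  by rewrite EFinM; apply: lee_wpmul2l => //; rewrite lee_fin invr_ge0.
case: (pselect (exists x y : 'I_d -> R, x <> y)) => [[x0 [y0 hxy]] | hne].
  apply: (le_trans H1).
  case: (eqVneq n 0) => [->|nn0].
    rewrite mulr0.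
    apply: (@le_trans _ _ ((`|Phi x0 - Phi y0| / norm2 (fun j => x0 j - y0 j))%:E)).
      by rewrite lee_fin divr_ge0 // /norm2 sqrtr_ge0.
    by apply: ereal_sup_ubound; exists x0, y0.
  have npos : 0 < n by rewrite lt_neqAle eq_sym nn0 n0.
  have An : dotp w w = n ^+ 2 by rewrite /n /norm2 sqr_sqrtr // dotp_ge0.
  set K := \sum_(i < N) `|c i| * (2 * `|b i|).
  have K0 : 0 <= K by apply: sumr_ge0 => i _; rewrite mulr_ge0 // mulr_ge0.
  apply/lee_addgt0Pr => e e0.
  set t := K / (2 * n * e) + 1.
  have q0 : 0 < 2 * n * e by rewrite !mulr_gt0.
  have t0 : 0 < t.
    have : 0 <= K / (2 * n * e) by rewrite divr_ge0 // ltW.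
    rewrite /t; lra.
  have tK : t * (2 * n * e) = K + 2 * n * e.
    by rewrite /t mulrDl divfK ?mul1r // gt_eqF.
  set x := fun j => t * w j.
  set y := fun j => - (t * w j).
  have xy : x <> y.
    move=> E; apply: (negP nn0); apply/eqP; rewrite /n /norm2 (_ : dotp w w = 0) ?sqrtr0 //.
    rewrite /dotp big1 // => j _.
    have := congr1 (fun f => f j) E; rewrite /x /y /= => Ej.
    have : t * w j = 0 by lra.
    by move/eqP; rewrite mulf_eq0 (gt_eqF t0) /= => /eqP ->; rewrite mul0r.
  have Nxy : norm2 (fun j => x j - y j) = 2 * t * n.
    rewrite /norm2 (_ : dotp _ _ = (2 * t) ^+ 2 * dotp w w).
      rewrite sqrtrM ?sqr_ge0 // sqrtr_sqr ger0_norm //.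
      by rewrite mulr_ge0 // ltW.
    by rewrite /dotp mulr_sumr; apply: eq_bigr => j _; rewrite /x /y; ring.
  have dx : forall i, dotp (a i) x = t * dotp (a i) w.
    by move=> i; rewrite /dotp mulr_sumr; apply: eq_bigr => j _; rewrite /x; ring.
  have dy : forall i, dotp (a i) y = - (t * dotp (a i) w).
    move=> i; rewrite /dotp mulr_sumr -sumrN; apply: eq_bigr => j _; rewrite /y; ring.
  have dw : dotp w w = \sum_(i < N) c i * dotp (a i) w.
    rewrite /dotp {1}/w; under eq_bigr => j _ do rewrite mulr_suml.
    rewrite exchange_big /=; apply: eq_bigr => i _; rewrite mulr_sumr.
    by apply: eq_bigr => j _; ring.
  have HD : t * n ^+ 2 - K <= `|Phi x - Phi y|.
    have : `|Phi x - Phi y - t * dotp w w| <= K.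
      have -> : Phi x - Phi y - t * dotp w w = \sum_(i < N) c i *
          (ReLU (t * dotp (a i) w + b i) - ReLU (- (t * dotp (a i) w) + b i)
           - t * dotp (a i) w).
        rewrite /Phi opprD addrACA subrr addr0 -sumrB dw mulr_sumr -sumrB.
        by apply: eq_bigr => i _; rewrite dx dy; ring.
      apply: le_trans (ler_norm_sum _ _ _) _; apply: ler_sum => i _.
      by rewrite normrM ler_wpM2l // relu_b.
    rewrite An ler_norml => /andP [h1 h2].
    have := ler_norm (Phi x - Phi y); lra.
  apply: (@le_trans _ _ ((`|Phi x - Phi y| / norm2 (fun j => x j - y j))%:E + e%:E)%E); last first.
    by rewrite leeD2r //; apply: ereal_sup_ubound; exists x, y.
  rewrite -EFinD lee_fin Nxy.
  suff : 2^-1 * n - e <= `|Phi x - Phi y| / (2 * t * n) by lra.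
  rewrite ler_pdivlMr ?mulr_gt0 //.
  have -> : (2^-1 * n - e) * (2 * t * n) = t * n ^+ 2 - t * (2 * n * e).
    by field.
  rewrite tK; lra.
rewrite /Lip.
have -> : [set r : \bar R | exists x y : 'I_d -> R,
     x <> y /\ r = ((`|Phit x - Phit y| / norm2 (fun j => x j - y j))%:E)] = set0.
  apply/seteqP; split => r //= [x [y [hxy _]]]; apply: hne; by exists x, y.
by rewrite ereal_sup0 mulrNy gtr0_sg ?invr_gt0 // mul1e leNye.
Qed.
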